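(* In the Cucker–Smale setting below, for all $n\in\mathbb{N}_0$, $$d_V(t_{2n+2})\le\frac{e^{\tilde K(t_{2n+2}-t_{2n+1})}}{2-e^{\tilde K(t_{2n+2}-t_{2n+1})}}\,d_V(t_{2n+1}).$$
   Context: Setting: $N\ge2$; $\tilde\psi:\mathbb{R}\to\mathbb{R}$ positive, bounded, continuous, with $\tilde K:=\|\tilde\psi\|_\infty$ and $\int_0^\infty\min_{r\in[0,x]}\tilde\psi(r)dx=+\infty$; $\{t_n\}_{n\in\mathbb{N}_0}$ increasing, nonnegative, $t_0=0$, $t_n\to\infty$, with $t_{2n+2}-t_{2n+1}<\frac{\ln2}{\tilde K}$ and $t_{2n+1}-t_{2n}>\frac1{\tilde K}$ for all $n$, and $\sum_{p\ge0}\ln\frac{e^{\tilde K(t_{2p+2}-t_{2p+1})}}{2-e^{\tilde K(t_{2p+2}-t_{2p+1})}}<\infty$. $\alpha(0)=1$, $\alpha=1$ on $(t_{2n},t_{2n+1})$, $\alpha=-1$ on $[t_{2n+1},t_{2n+2}]$. $\{(x_i,v_i)\}$ solves $x_i'=v_i$, $v_i'(t)=\frac1{N-1}\sum_{j\ne i}\alpha(t)\tilde\psi(|x_i(t)-x_j(t)|)(v_j(t)-v_i(t))$, $t>0$, with given initial data in $\mathbb{R}^d$ (continuous, $C^1$ on each $(t_n,t_{n+1})$). $d_V(t):=\max_{i,j}|v_i(t)-v_j(t)|$. *)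

(* Defs.v *)
From Stdlib Require Import Reals Lra List.
From Coquelicot Require Import Coquelicot.
Import ListNotations.
Open Scope R_scope.

Definition sumR (l : list nat) (f : nat -> R) : R :=
  fold_right (fun j acc => f j + acc) 0 l.

Definition maxR (l : list nat) (f : nat -> R) : R :=
  fold_right (fun j acc => Rmax (f j) acc) 0 l.

(* A vector of R^d is represented by its coordinate function k |-> v k, k < d.
   Euclidean norm |v|. *)
Definition enorm (d : nat) (v : nat -> R) : R :=
  sqrt (sumR (seq 0 d) (fun k => v k ^ 2)).

(* |x_i(t) - x_j(t)| for a configuration x : particle -> coordinate -> time -> R *)
Definition edist (d : nat) (x : nat -> nat -> R -> R) (i j : nat) (t : R) : R :=
  enorm d (fun k => x i k t - x j k t).

Definition dV (N d : nat) (v : nat -> nat -> R -> R) (t : R) : R :=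
  maxR (seq 0 N) (fun i => maxR (seq 0 N) (fun j => edist d v i j t)).

(* min_{r in [0,x]} psi r (the infimum, attained since psi is continuous) *)
Definition psi_min (psi : R -> R) (x : R) : R :=
  real (Glb_Rbar (fun y => exists r, 0 <= r <= x /\ y = psi r)).

Definition cont_on_nonneg (f : R -> R) : Prop :=
  forall t, 0 <= t -> forall eps, 0 < eps -> exists delta, 0 < delta /\
    forall s, 0 <= s -> Rabs (s - t) < delta -> Rabs (f s - f t) < eps.

Definition gfac (K tau : R) : R := exp (K * tau) / (2 - exp (K * tau)).

(* Main.v *)
Require Import Defs.
From Stdlib Require Import Reals Lra List Lia.
From Coquelicot Require Import Coquelicot.
Import ListNotations.
Open Scope R_scope.

Lemma cR_plus (f g : R -> R) x : continuous f x -> continuous g x -> continuous (fun t => f t + g t) x.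
Proof. intros; exact (continuous_plus f g x H H0). Qed.
Lemma cR_minus (f g : R -> R) x : continuous f x -> continuous g x -> continuous (fun t => f t - g t) x.
Proof. intros; exact (continuous_minus f g x H H0). Qed.
Lemma cR_mult (f g : R -> R) x : continuous f x -> continuous g x -> continuous (fun t => f t * g t) x.
Proof. intros; exact (continuous_mult f g x H H0). Qed.
Lemma cR_max (f g : R -> R) x : continuous f x -> continuous g x -> continuous (fun t => Rmax (f t) (g t)) x.
Proof.
  intros Hf Hg.
  apply continuous_ext with (fun t => (f t + g t + Rabs (f t - g t)) * / 2).
  { intro t. unfold Rmax. destruct (Rle_dec (f t) (g t)).
    - rewrite Rabs_left1 by lra. lra.
    - rewrite Rabs_right by lra. lra. }
  apply cR_mult; [|apply continuous_const].
  apply cR_plus; [apply cR_plus; auto|].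
  apply continuous_Rabs_comp. apply cR_minus; auto.
Qed.

Lemma maxR_cont (l : list nat) (g : nat -> R -> R) x :
  (forall i, In i l -> continuous (g i) x) -> continuous (fun t => maxR l (fun i => g i t)) x.
Proof.
  induction l as [|a l IH]; intros H; simpl.
  - apply continuous_const.
  - apply cR_max. apply H; simpl; auto. apply IH; intros; apply H; simpl; auto.
Qed.

Lemma sumR_cont (l : list nat) (g : nat -> R -> R) x :
  (forall i, In i l -> continuous (g i) x) -> continuous (fun t => sumR l (fun i => g i t)) x.
Proof.
  induction l as [|a l IH]; intros H; simpl.
  - apply continuous_const.
  - apply cR_plus. apply H; simpl; auto. apply IH; intros; apply H; simpl; auto.
Qed.

Lemma sumR_deriv (l : list nat) (g dg : nat -> R -> R) x :
  (forall i, In i l -> is_derive (g i) x (dg i x)) ->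
  is_derive (fun t => sumR l (fun i => g i t)) x (sumR l (fun i => dg i x)).
Proof.
  induction l as [|a l IH]; intros H; simpl.
  - apply (is_derive_const 0 x).
  - apply (is_derive_plus (fun t => g a t) (fun t => sumR l (fun i => g i t))).
    apply H; simpl; auto. apply IH; intros; apply H; simpl; auto.
Qed.

Lemma sq_deriv (g : R -> R) x dg : is_derive g x dg ->
  is_derive (fun t => g t ^ 2) x (2 * g x * dg).
Proof.
  intros H. assert (H2 := is_derive_pow g 2 x dg H).
  replace (2 * g x * dg) with (INR 2 * dg * g x ^ Init.Nat.pred 2) by (simpl; ring). exact H2.
Qed.

Lemma sumR_ext l f g : (forall x, In x l -> f x = g x) -> sumR l f = sumR l g.
Proof. induction l; simpl; intros; auto. rewrite H, IHl; auto. Qed.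
Lemma sumR_le l f g : (forall x, In x l -> f x <= g x) -> sumR l f <= sumR l g.
Proof. induction l; simpl; intros; [lra|]. apply Rplus_le_compat; auto. Qed.
Lemma sumR_plus l f g : sumR l (fun x => f x + g x) = sumR l f + sumR l g.
Proof. induction l; simpl; [ring|]. rewrite IHl; ring. Qed.
Lemma sumR_scal l c f : sumR l (fun x => c * f x) = c * sumR l f.
Proof. induction l; simpl; [ring|]. rewrite IHl; ring. Qed.
Lemma sumR_exch l1 l2 (g : nat -> nat -> R) :
  sumR l1 (fun k => sumR l2 (fun m => g k m)) = sumR l2 (fun m => sumR l1 (fun k => g k m)).
Proof.
  induction l1; simpl.
  - induction l2; simpl; auto. rewrite <- IHl2; ring.
  - rewrite IHl1. rewrite <- sumR_plus. reflexivity.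
Qed.
Lemma sumR_const l c : sumR l (fun _ => c) = INR (length l) * c.
Proof. induction l; simpl; [ring|]. rewrite IHl. destruct (length l); simpl; ring. Qed.

Lemma maxR_ge l f x : In x l -> f x <= maxR l f.
Proof. induction l; simpl; intros H; [contradiction|]. destruct H as [->|H]. apply Rmax_l. eapply Rle_trans; [apply IHl; auto| apply Rmax_r]. Qed.
Lemma maxR_nonneg l f : 0 <= maxR l f.
Proof. induction l; simpl; [lra|]. eapply Rle_trans; [apply IHl| apply Rmax_r]. Qed.
Lemma maxR_lub l f M : 0 <= M -> (forall x, In x l -> f x <= M) -> maxR l f <= M.
Proof. induction l; simpl; intros; auto. apply Rmax_lub; auto. Qed.
Lemma maxR_sqrt l f : (forall x, 0 <= f x) -> maxR l (fun x => sqrt (f x)) = sqrt (maxR l f).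
Proof.
  intros Hf. induction l; simpl. now rewrite sqrt_0.
  rewrite IHl. unfold Rmax. destruct (Rle_dec (sqrt (f a)) (sqrt (maxR l f))), (Rle_dec (f a) (maxR l f)); auto.
  all: apply Rle_antisym; first [assumption | apply sqrt_le_1_alt; lra | lra].
Qed.

Lemma len_filt_A i : forall n s, (i < s)%nat ->
  length (filter (fun j => negb (Nat.eqb j i)) (seq s n)) = n.
Proof.
  induction n; intros s H; simpl; auto.
  destruct (Nat.eqb s i) eqn:E. apply Nat.eqb_eq in E; lia.
  simpl. rewrite IHn; lia.
Qed.
Lemma len_filt_B i : forall n s, (s <= i < s + n)%nat ->
  length (filter (fun j => negb (Nat.eqb j i)) (seq s n)) = (n - 1)%nat.
Proof.
  induction n; intros s H; [lia|]. simpl.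
  destruct (Nat.eqb s i) eqn:E.
  - apply Nat.eqb_eq in E. simpl. rewrite len_filt_A; lia.
  - apply Nat.eqb_neq in E. simpl. rewrite IHn; lia.
Qed.

Lemma nonincr (f df : R -> R) a b : a <= b ->
  (forall x, a < x < b -> is_derive f x (df x)) ->
  (forall x, a < x < b -> df x <= 0) ->
  (forall x, a <= x <= b -> continuity_pt f x) -> f b <= f a.
Proof.
  intros Hab Hd Hn Hc.
  set (df' := fun x => if Rlt_dec a x then if Rlt_dec x b then df x else 0 else 0).
  assert (Hmin : Rmin a b = a) by (apply Rmin_left; lra).
  assert (Hmax : Rmax a b = b) by (apply Rmax_right; lra).
  destruct (MVT_gen f a b df') as [c [Hc1 Hc2]].
  - rewrite Hmin, Hmax. intros x Hx. unfold df'.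
    destruct (Rlt_dec a x); [|lra]. destruct (Rlt_dec x b); [|lra]. auto.
  - rewrite Hmin, Hmax. auto.
  - assert (df' c <= 0).
    { unfold df'. destruct (Rlt_dec a c); [|lra]. destruct (Rlt_dec c b) ; [|lra]. apply Hn. rewrite Hmin,Hmax in Hc1. lra. }
    assert (df' c * (b - a) <= 0). { apply Rmult_le_0_r; lra. } lra.
Qed.

Lemma cont_eps (g : R -> R) c : continuous g c ->
  forall eps, 0 < eps -> exists alp, 0 < alp /\ forall s, Rabs (s - c) < alp -> Rabs (g s - g c) < eps.
Proof.
  intros Hg eps He. apply continuity_pt_filterlim in Hg.
  unfold continuity_pt, continue_in, limit1_in, limit_in in Hg. simpl in Hg.
  destruct (Hg eps He) as [alp [Ha H]]. exists alp; split; auto.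
  intros s Hs. destruct (Req_dec s c) as [->|Hne].
  - unfold Rminus; rewrite Rplus_opp_r, Rabs_R0; lra.
  - apply H. split. split. exact I. auto. exact Hs.
Qed.

Section G.
Lemma gron (L : list nat) (f df : nat -> nat -> R -> R) (C a b : R) :
 a <= b -> 0 <= C ->
 (forall i j t, In i L -> In j L -> a <= t <= b -> continuous (f i j) t) ->
 (forall i j t, In i L -> In j L -> a < t < b -> is_derive (f i j) t (df i j t)) ->
 (forall i j t, In i L -> In j L -> a < t < b ->
     df i j t <= C * maxR L (fun i => maxR L (fun j => f i j t))) ->
 maxR L (fun i => maxR L (fun j => f i j b)) <=
   maxR L (fun i => maxR L (fun j => f i j a)) * exp (C * (b - a)).
Proof.
  intros Hab HC Hcont Hder Hbd.
  set (F := fun t => maxR L (fun i => maxR L (fun j => f i j t))).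
  change (F b <= F a * exp (C * (b - a))).
  assert (HF0 : forall t, 0 <= F t) by (intros; apply maxR_nonneg).
  assert (HFge : forall i j t, In i L -> In j L -> f i j t <= F t).
  { intros i j t Hi Hj. eapply Rle_trans; [|apply (maxR_ge L (fun i => maxR L (fun j => f i j t)) i Hi)].
    apply (maxR_ge L (fun j => f i j t) j Hj). }
  assert (HFc : forall t, a <= t <= b -> continuous F t).
  { intros t Ht. unfold F. apply (maxR_cont L (fun i t => maxR L (fun j => f i j t))).
    intros i Hi. apply (maxR_cont L (fun j t => f i j t)). intros j Hj. apply Hcont; auto. }
  assert (Heps : forall eps, 0 < eps -> F b <= (F a + eps) * exp (C * (b - a))).
  { intros eps He.
    set (B := fun t => (F a + eps) * exp (C * (t - a))).
    assert (HBd : forall t, is_derive B t (C * B t)).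
    { intros t. unfold B. auto_derive; auto. unfold Rminus; ring. }
    assert (HBc : forall t, continuous B t).
    { intros t. exact (ex_derive_continuous (V:=R_NormedModule) B t (ex_intro _ _ (HBd t))). }
    assert (HBge : forall t, a <= t -> F a + eps <= B t).
    { intros t Ht. unfold B. rewrite <- (Rmult_1_r (F a + eps)) at 1.
      apply Rmult_le_compat_l. specialize (HF0 a); lra.
      rewrite <- exp_0. destruct (Req_dec (C * (t - a)) 0) as [E|E]. rewrite E; lra.
      left. apply exp_increasing. assert (0 <= C * (t - a)) by (apply Rmult_le_pos; lra). lra. }
    set (E := fun t => a <= t <= b /\ forall s, a <= s <= t -> F s <= B s).
    assert (Ea : E a).
    { split. lra. intros s Hs. replace s with a by lra. unfold B. replace (C * (a - a)) with 0 by ring.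
      rewrite exp_0. lra. }
    destruct (completeness E) as [c [Hub Hlub]].
    { exists b. intros t [Ht _]. lra. }
    { exists a; auto. }
    assert (Hca : a <= c) by (apply Hub; auto).
    assert (Hcb : c <= b) by (apply Hlub; intros t [Ht _]; lra).
    assert (Hkey : forall s, a <= s < c -> F s <= B s).
    { intros s Hs. destruct (Rle_dec (F s) (B s)) as [|Hn]; auto. exfalso.
      assert (c <= s); [|lra]. apply Hlub. intros t [Ht1 Ht3].
      destruct (Rle_dec t s) as [|Hts]; auto. exfalso. apply Hn. apply Ht3. lra. }
    assert (Hpair : forall i j, In i L -> In j L -> f i j c <= B c - eps).
    { intros i j Hi Hj.
      assert (H := nonincr (fun t => f i j t - B t) (fun t => df i j t - C * B t) a c Hca).
      cbv beta in H.
      assert (f i j c - B c <= f i j a - B a); [|].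
      { apply H.
        - intros x Hx. apply (is_derive_minus (fun t => f i j t) B x). apply Hder; auto; lra. apply HBd.
        - intros x Hx. assert (df i j x <= C * F x) by (apply Hbd; auto; lra).
          assert (C * F x <= C * B x) by (apply Rmult_le_compat_l; auto; apply Hkey; lra). lra.
        - intros x Hx. apply continuity_pt_filterlim. apply cR_minus. apply Hcont; auto; lra. apply HBc. }
      assert (f i j a <= F a) by auto.
      assert (B a = F a + eps). { unfold B. replace (C * (a - a)) with 0 by ring. rewrite exp_0. ring. }
      lra. }
    assert (HFcB : F c <= B c - eps).
    { unfold F. apply maxR_lub. specialize (HBge c Hca). specialize (HF0 a). lra.
      intros i Hi. apply maxR_lub. specialize (HBge c Hca). specialize (HF0 a). lra.
      intros j Hj. auto. }
    assert (Hcb' : c = b).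
    { destruct (Req_dec c b) as [|Hne]; auto. exfalso.
      assert (Hct : continuous (fun t => F t - B t) c) by (apply cR_minus; [apply HFc; lra | apply HBc]).
      destruct (cont_eps _ c Hct eps He) as [alp [Halp Hs]].
      set (t' := Rmin (c + alp / 2) b).
      assert (Et' : E t').
      { unfold t'. split. split. apply Rmin_glb; lra. apply Rmin_r.
        intros s Hs'. destruct (Rlt_dec s c) as [Hsc|Hsc]. apply Hkey; lra.
        assert (s <= c + alp / 2) by (eapply Rle_trans; [apply Hs'| apply Rmin_l]).
        assert (Rabs (s - c) < alp) by (rewrite Rabs_right; lra).
        specialize (Hs s H0). apply Rabs_def2 in Hs. lra. }
      specialize (Hub t' Et'). unfold t' in Hub.
      unfold Rmin in Hub. destruct (Rle_dec (c + alp / 2) b); lra. }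
    subst c. unfold B in HFcB. lra. }
  set (X := exp (C * (b - a))). fold X in Heps.
  assert (HX : 0 < X) by apply exp_pos.
  destruct (Rle_dec (F b) (F a * X)) as [|Hn]; auto. exfalso.
  set (eps := (F b - F a * X) / (2 * X)).
  assert (He : 0 < eps). { unfold eps. apply Rdiv_lt_0_compat; lra. }
  specialize (Heps eps He).
  assert ((F a + eps) * X = F a * X + (F b - F a * X) / 2) by (unfold eps; field; lra).
  lra.
Qed.
End G.

Lemma cs_bound (l : list nat) (a b : nat -> R) (s : R) : s * s = 1 ->
  s * sumR l (fun k => a k * b k) <= (sumR l (fun k => a k ^ 2) + sumR l (fun k => b k ^ 2)) / 2.
Proof.
  intros Hs. rewrite <- sumR_scal.
  replace ((sumR l (fun k => a k ^ 2) + sumR l (fun k => b k ^ 2)) / 2) with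
    (sumR l (fun k => / 2 * (a k ^ 2 + b k ^ 2))).
  2:{ rewrite sumR_scal, sumR_plus. field. }
  apply sumR_le. intros k _.
  assert (0 <= (s * a k - b k) ^ 2) by (apply pow2_ge_0).
  assert ((s * a k - b k) ^ 2 = s * s * a k ^ 2 - 2 * (s * (a k * b k)) + b k ^ 2) by ring.
  rewrite Hs in H0. lra.
Qed.

Lemma exch_inner (l1 l2 : list nat) (u : nat -> R) (q : nat -> nat -> R) :
  sumR l1 (fun k => u k * sumR l2 (fun m => q m k)) =
  sumR l2 (fun m => sumR l1 (fun k => u k * q m k)).
Proof.
  rewrite <- sumR_exch. apply sumR_ext. intros k _. rewrite <- sumR_scal. reflexivity.
Qed.

Lemma bound_main (N d : nat) (HN : (2 <= N)%nat) (V : nat -> nat -> R) (P : nat -> nat -> R)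
  (K al : R) (i j : nat) (Hi : (i < N)%nat) (Hj : (j < N)%nat)
  (HP : forall p q, 0 < P p q /\ P p q <= K) (Hal : al = -1) :
  sumR (seq 0 d) (fun k => 2 * (V i k - V j k) *
     (/ (INR N - 1) * sumR (filter (fun l => negb (Nat.eqb l i)) (seq 0 N)) (fun l => al * P i l * (V l k - V i k))
      - / (INR N - 1) * sumR (filter (fun l => negb (Nat.eqb l j)) (seq 0 N)) (fun l => al * P j l * (V l k - V j k))))
  <= 4 * K * maxR (seq 0 N) (fun p => maxR (seq 0 N) (fun q => sumR (seq 0 d) (fun k => (V p k - V q k) ^ 2))).
Proof.
  set (G := maxR (seq 0 N) (fun p => maxR (seq 0 N) (fun q => sumR (seq 0 d) (fun k => (V p k - V q k) ^ 2)))).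
  set (f := fun p q => sumR (seq 0 d) (fun k => (V p k - V q k) ^ 2)).
  assert (HG0 : 0 <= G) by apply maxR_nonneg.
  assert (HfG : forall p q, (p < N)%nat -> (q < N)%nat -> f p q <= G).
  { intros p q Hp Hq. unfold G.
    assert (Ip : In p (seq 0 N)) by (apply in_seq; lia).
    assert (Iq : In q (seq 0 N)) by (apply in_seq; lia).
    eapply Rle_trans; [|apply (maxR_ge _ (fun p => maxR (seq 0 N) (fun q => f p q)) p Ip)].
    apply (maxR_ge _ (fun q => f p q) q Iq). }
  set (c := / (INR N - 1)).
  assert (HN1 : INR N - 1 > 0). { assert (INR 2 <= INR N) by (apply le_INR; lia). simpl in H. lra. }
  assert (Hc : 0 < c) by (apply Rinv_0_lt_compat; lra).
  set (Li := filter (fun l => negb (Nat.eqb l i)) (seq 0 N)).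
  set (Lj := filter (fun l => negb (Nat.eqb l j)) (seq 0 N)).
  set (u := fun k => V i k - V j k).
  assert (Hinner : forall m Lm, sumR (seq 0 d) (fun k => u k * sumR Lm (fun l => al * P m l * (V l k - V m k)))
     = sumR Lm (fun l => P m l * sumR (seq 0 d) (fun k => u k * (V m k - V l k)))).
  { intros m Lm. rewrite (exch_inner _ _ u (fun l k => al * P m l * (V l k - V m k))).
    apply sumR_ext. intros l _. rewrite <- sumR_scal. apply sumR_ext. intros k _. rewrite Hal. ring. }
  assert (Hsplit : sumR (seq 0 d) (fun k => 2 * (V i k - V j k) *
     (c * sumR Li (fun l => al * P i l * (V l k - V i k)) - c * sumR Lj (fun l => al * P j l * (V l k - V j k))))
     = 2 * c * sumR (seq 0 d) (fun k => u k * sumR Li (fun l => al * P i l * (V l k - V i k)))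
       + (- (2 * c)) * sumR (seq 0 d) (fun k => u k * sumR Lj (fun l => al * P j l * (V l k - V j k)))).
  { rewrite <- !sumR_scal, <- sumR_plus. apply sumR_ext. intros k _. unfold u. ring. }
  rewrite Hsplit, !Hinner. clear Hsplit Hinner.
  assert (HlenI : INR (length Li) = INR N - 1).
  { unfold Li. rewrite len_filt_B by lia. rewrite minus_INR by lia. simpl. ring. }
  assert (HlenJ : INR (length Lj) = INR N - 1).
  { unfold Lj. rewrite len_filt_B by lia. rewrite minus_INR by lia. simpl. ring. }
  assert (HinL : forall m l, In l (filter (fun l => negb (Nat.eqb l m)) (seq 0 N)) -> (l < N)%nat).
  { intros m l Hl. apply filter_In in Hl. destruct Hl as [Hl _]. apply in_seq in Hl. lia. }
  assert (HA : sumR Li (fun l => P i l * sumR (seq 0 d) (fun k => u k * (V i k - V l k))) <= (INR N - 1) * (K * G)).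
  { rewrite <- HlenI, <- sumR_const. apply sumR_le. intros l Hl.
    assert (Hl' : (l < N)%nat) by (eapply HinL; exact Hl).
    assert (X : 1 * sumR (seq 0 d) (fun k => u k * (V i k - V l k)) <= G).
    { eapply Rle_trans. apply (cs_bound _ u (fun k => V i k - V l k) 1). ring.
      assert (f i j <= G) by auto. assert (f i l <= G) by auto. unfold f, u in *. lra. }
    destruct (HP i l). 
    assert (P i l * sumR (seq 0 d) (fun k => u k * (V i k - V l k)) <= P i l * G) by (apply Rmult_le_compat_l; lra).
    assert (P i l * G <= K * G) by (apply Rmult_le_compat_r; lra). lra. }
  assert (HB : - sumR Lj (fun l => P j l * sumR (seq 0 d) (fun k => u k * (V j k - V l k))) <= (INR N - 1) * (K * G)).
  { rewrite <- HlenJ, <- sumR_const. replace (- sumR Lj (fun l => P j l * sumR (seq 0 d) (fun k => u k * (V j k - V l k))))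
      with (sumR Lj (fun l => P j l * (-1 * sumR (seq 0 d) (fun k => u k * (V j k - V l k))))).
    2:{ replace (- sumR Lj (fun l => P j l * sumR (seq 0 d) (fun k => u k * (V j k - V l k))))
          with (-1 * sumR Lj (fun l => P j l * sumR (seq 0 d) (fun k => u k * (V j k - V l k)))) by ring.
        rewrite <- sumR_scal. apply sumR_ext. intros; ring. }
    apply sumR_le. intros l Hl.
    assert (Hl' : (l < N)%nat) by (eapply HinL; exact Hl).
    assert (X : -1 * sumR (seq 0 d) (fun k => u k * (V j k - V l k)) <= G).
    { eapply Rle_trans. apply (cs_bound _ u (fun k => V j k - V l k) (-1)). ring.
      assert (f i j <= G) by auto. assert (f j l <= G) by auto. unfold f, u in *. lra. }
    destruct (HP j l).
    assert (P j l * (-1 * sumR (seq 0 d) (fun k => u k * (V j k - V l k))) <= P j l * G) by (apply Rmult_le_compat_l; lra).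
    assert (P j l * G <= K * G) by (apply Rmult_le_compat_r; lra). lra. }
  set (A := sumR Li _) in *. set (B := sumR Lj _) in *.
  assert (Hc1 : c * (INR N - 1) = 1) by (unfold c; field; lra).
  assert (2 * c * A <= 2 * c * ((INR N - 1) * (K * G))) by (apply Rmult_le_compat_l; lra).
  assert (2 * c * (- B) <= 2 * c * ((INR N - 1) * (K * G))) by (apply Rmult_le_compat_l; lra).
  replace (2 * c * ((INR N - 1) * (K * G))) with (2 * (K * G) * (c * (INR N - 1))) in * by ring.
  rewrite Hc1 in *. lra.
Qed.

Lemma cont_of_nonneg (g : R -> R) t : cont_on_nonneg g -> 0 < t -> continuous g t.
Proof.
  intros Hg Ht. apply continuity_pt_filterlim.
  unfold continuity_pt, continue_in, limit1_in, limit_in. simpl. unfold R_dist.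
  intros eps He. destruct (Hg t (Rlt_le _ _ Ht) eps He) as [del [Hd H]].
  exists (Rmin del t). split. apply Rmin_pos; lra.
  intros s [_ Hs]. assert (Rabs (s - t) < del) by (eapply Rlt_le_trans; [apply Hs|apply Rmin_l]).
  assert (Rabs (s - t) < t) by (eapply Rlt_le_trans; [apply Hs|apply Rmin_r]).
  apply H; auto. apply Rabs_def2 in H1. lra.
Qed.

Lemma cR_sq (g : R -> R) t : continuous g t -> continuous (fun s => g s ^ 2) t.
Proof. intros H. apply continuous_ext with (fun s => g s * (g s * 1)). intros; simpl; ring.
  apply cR_mult; auto. apply cR_mult; auto. apply continuous_const. Qed.

Lemma maxR_ext l f g : (forall x, f x = g x) -> maxR l f = maxR l g.
Proof. induction l; simpl; intros; auto. rewrite H, IHl; auto. Qed.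

Lemma sumR_sq_nonneg l (g : nat -> R) : 0 <= sumR l (fun k => g k ^ 2).
Proof. induction l. simpl; lra. change (0 <= g a ^ 2 + sumR l (fun k => g k ^ 2)). assert (0 <= g a ^ 2) by apply pow2_ge_0. lra. Qed.

Lemma tn_mono (tn : nat -> R) (H : forall n, tn n < tn (S n)) : forall m p, (m < p)%nat -> tn m < tn p.
Proof.
  intros m p Hmp. induction Hmp. apply H. eapply Rlt_trans; [apply IHHmp| apply H].
Qed.
Theorem lemma7p10
  (N d : nat) (HN : (2 <= N)%nat)
  (psi : R -> R) (K : R)
  (Hpsi_pos : forall r, 0 < psi r)
  (Hpsi_cont : forall r, continuous psi r)
  (HK : is_lub (fun y => exists r, y = psi r) K)
  (Hpsi_int : forall M, exists X, 0 < X /\ M < RInt (psi_min psi) 0 X)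
  (tn : nat -> R)
  (Ht0 : tn O = 0)
  (Ht_incr : forall n, tn n < tn (S n))
  (Ht_nonneg : forall n, 0 <= tn n)
  (Ht_lim : is_lim_seq tn p_infty)
  (Ht_short : forall n, tn (2 * n + 2)%nat - tn (2 * n + 1)%nat < ln 2 / K)
  (Ht_long : forall n, tn (2 * n + 1)%nat - tn (2 * n)%nat > 1 / K)
  (Ht_sum : ex_series (fun p => ln (gfac K (tn (2 * p + 2)%nat - tn (2 * p + 1)%nat))))
  (alpha : R -> R)
  (Halpha0 : alpha 0 = 1)
  (Halpha_pos : forall n t, tn (2 * n)%nat < t < tn (2 * n + 1)%nat -> alpha t = 1)
  (Halpha_neg : forall n t, tn (2 * n + 1)%nat <= t <= tn (2 * n + 2)%nat -> alpha t = -1)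
  (x v : nat -> nat -> R -> R)
  (Hx_cont : forall i k, (i < N)%nat -> (k < d)%nat -> cont_on_nonneg (x i k))
  (Hv_cont : forall i k, (i < N)%nat -> (k < d)%nat -> cont_on_nonneg (v i k))
  (Hx_eq : forall i k t, (i < N)%nat -> (k < d)%nat -> 0 < t ->
     (forall m, t <> tn m) -> is_derive (x i k) t (v i k t))
  (Hv_eq : forall i k t, (i < N)%nat -> (k < d)%nat -> 0 < t ->
     (forall m, t <> tn m) ->
     is_derive (v i k) t
       (/ (INR N - 1) *
        sumR (filter (fun j => negb (Nat.eqb j i)) (seq 0 N))
          (fun j => alpha t * psi (edist d x i j t) * (v j k t - v i k t)))) :
  forall n : nat,
    dV N d v (tn (2 * n + 2)%nat)
    <= gfac K (tn (2 * n + 2)%nat - tn (2 * n + 1)%nat) * dV N d v (tn (2 * n + 1)%nat).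
Proof.
  intros n.
  set (a := tn (2 * n + 1)%nat). set (b := tn (2 * n + 2)%nat).
  assert (HpsiK : forall r, psi r <= K) by (intros r; destruct HK as [Hub _]; apply Hub; exists r; auto).
  assert (HKpos : 0 < K) by (specialize (HpsiK 0); specialize (Hpsi_pos 0); lra).
  assert (Hab : a < b).
  { unfold a, b. replace (2 * n + 2)%nat with (S (2 * n + 1)) by lia. apply Ht_incr. }
  assert (Ha0 : 0 < a). { unfold a. rewrite <- Ht0. apply tn_mono; auto. lia. }
  assert (Hno : forall t, a < t < b -> forall m, t <> tn m).
  { intros t Ht m Heq. destruct (Nat.le_gt_cases m (2 * n + 1)) as [Hm|Hm].
    - destruct (Nat.eq_dec m (2 * n + 1)) as [->|Hm'].
      + fold a in Heq. lra.
      + assert (tn m < a) by (apply tn_mono; auto; lia). lra.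
    - destruct (Nat.eq_dec m (2 * n + 2)) as [->|Hm'].
      + fold b in Heq. lra.
      + assert (b < tn m) by (apply tn_mono; auto; lia). lra. }
  assert (Halpha : forall t, a < t < b -> alpha t = -1).
  { intros t Ht. apply (Halpha_neg n). unfold a, b in Ht. lra. }
  set (f := fun i j t => sumR (seq 0 d) (fun k => (v i k t - v j k t) ^ 2)).
  set (w := fun i k t => / (INR N - 1) * sumR (filter (fun j => negb (Nat.eqb j i)) (seq 0 N))
        (fun j => alpha t * psi (edist d x i j t) * (v j k t - v i k t))).
  set (df := fun i j t => sumR (seq 0 d) (fun k => 2 * (v i k t - v j k t) * (w i k t - w j k t))).
  assert (Hg := gron (seq 0 N) f df (4 * K) a b (Rlt_le _ _ Hab) ltac:(lra)).
  assert (Hg' : maxR (seq 0 N) (fun i => maxR (seq 0 N) (fun j => f i j b)) <=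
     maxR (seq 0 N) (fun i => maxR (seq 0 N) (fun j => f i j a)) * exp (4 * K * (b - a))).
  { apply Hg.
    - intros i j t Hi Hj Ht. apply in_seq in Hi. apply in_seq in Hj. unfold f.
      apply (sumR_cont _ (fun k t => (v i k t - v j k t) ^ 2)). intros k Hk. apply in_seq in Hk.
      apply (cR_sq (fun t => v i k t - v j k t)). apply cR_minus; apply cont_of_nonneg; try lra.
      apply Hv_cont; lia. apply Hv_cont; lia.
    - intros i j t Hi Hj Ht. apply in_seq in Hi. apply in_seq in Hj. unfold df, f.
      apply (sumR_deriv _ (fun k t => (v i k t - v j k t) ^ 2)
          (fun k t => 2 * (v i k t - v j k t) * (w i k t - w j k t))).
      intros k Hk. apply in_seq in Hk.
      apply (sq_deriv (fun t => v i k t - v j k t)).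
      apply (is_derive_minus (fun t => v i k t) (fun t => v j k t)).
      + apply Hv_eq; try lia; try lra. apply Hno; lra.
      + apply Hv_eq; try lia; try lra. apply Hno; lra.
    - intros i j t Hi Hj Ht. apply in_seq in Hi. apply in_seq in Hj. unfold df, w, f.
      apply (bound_main N d HN (fun p k => v p k t) (fun p q => psi (edist d x p q t)) K (alpha t) i j); try lia.
      intros; split; auto. apply Halpha; lra. }
  clear Hg.
  assert (HdV : forall t, dV N d v t = sqrt (maxR (seq 0 N) (fun i => maxR (seq 0 N) (fun j => f i j t)))).
  { intros t. unfold dV. rewrite <- maxR_sqrt by (intros; apply maxR_nonneg). apply maxR_ext. intros i.
    rewrite <- maxR_sqrt by (intros; apply sumR_sq_nonneg). apply maxR_ext. intros j. reflexivity. }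
  fold a b. rewrite !HdV.
  set (Fa := maxR (seq 0 N) (fun i => maxR (seq 0 N) (fun j => f i j a))) in *.
  set (Fb := maxR (seq 0 N) (fun i => maxR (seq 0 N) (fun j => f i j b))) in *.
  assert (HFa : 0 <= Fa) by apply maxR_nonneg.
  set (tau := b - a) in *.
  set (y := exp (K * tau)).
  assert (Hy0 : 0 < y) by apply exp_pos.
  assert (Hy2 : y < 2).
  { unfold y. rewrite <- (exp_ln 2) by lra. apply exp_increasing.
    assert (tau < ln 2 / K) by (apply Ht_short).
    apply (Rmult_lt_compat_l K) in H; auto. unfold Rdiv in H. rewrite <- Rmult_assoc, (Rmult_comm K (ln 2)), Rmult_assoc, Rinv_r in H; lra. }
  assert (HE : exp (4 * K * tau) = (y * y) * (y * y)).
  { unfold y. rewrite <- !exp_plus. f_equal. ring. }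
  rewrite HE in Hg'.
  assert (HyE : 0 <= y * y) by nra.
  eapply Rle_trans. apply sqrt_le_1_alt. exact Hg'.
  rewrite sqrt_mult by nra. rewrite sqrt_square by nra.
  fold a b tau. unfold gfac. fold y.
  rewrite (Rmult_comm (sqrt Fa)). apply Rmult_le_compat_r. apply sqrt_pos.
  assert (y / (2 - y) - y * y = y * ((y - 1) ^ 2) / (2 - y)) by (field; lra).
  assert (0 <= y * ((y - 1) ^ 2) / (2 - y)).
  { apply Rmult_le_pos. apply Rmult_le_pos. lra. apply pow2_ge_0. left. apply Rinv_0_lt_compat. lra. }
  lra.
Qed.
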